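(* Let $k\le l$ be positive integers with $\gcd(k,l)=1$, let $n\ge1$ and $m\ge 0$ be integers, and write $m=qn+r$ with integers $q\ge 0$, $0\le r<n$. If $\frac{n}{q+2}\le r\le \frac{nk}{k+l}$, then $L^{k,l}(m,n)=nkq+r(k+l)$. If $r\ge \frac{nk}{k+l}$, then $L^{k,l}(m,n)=nk(q+1)$.
   Context: $\mathcal D^{k,l}(m,n)$ denotes the set of all $nk\times nl$ matrices with nonnegative integer entries all of whose row sums equal $ml$ and all of whose column sums equal $mk$. For an $s\times t$ matrix $A=(a_{ij})$ with $s\le t$, a transversal of $A$ is a set of entries $T=\{a_{1i_1},\dots,a_{si_s}\}$ with $i_1,\dots,i_s\in\{1,\dots,t\}$ pairwise distinct, and $|T|=a_{1i_1}+\cdots+a_{si_s}$; if $s>t$, the transversals of $A$ are those of its transpose. The tropical determinant is ${\rm tdet}(A)=\max_T|T|$, and $L^{k,l}(m,n)=\min_{A\in\mathcal D^{k,l}(m,n)}{\rm tdet}(A)$. *)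

(* Defs.v *)
From mathcomp Require Import all_boot all_order all_algebra.
Set Implicit Arguments. Unset Strict Implicit. Unset Printing Implicit Defensive.

(* For s <= t a transversal is given by
   an injective map from rows to columns; for s > t we use the transpose,
   i.e. an injective map from columns to rows. *)
Definition tdet (s t : nat) (A : 'M[nat]_(s, t)) : nat :=
  if s <= t then
    \max_(f : {ffun 'I_s -> 'I_t} | injectiveb f) \sum_(i < s) A i (f i)
  else
    \max_(f : {ffun 'I_t -> 'I_s} | injectiveb f) \sum_(j < t) A (f j) j.

Arguments tdet : clear implicits.
Definition inD (k l m n : nat) (A : 'M[nat]_(n * k, n * l)) : Prop :=
  (forall i, \sum_(j < n * l) A i j = m * l) /\
  (forall j, \sum_(i < n * k) A i j = m * k).

Arguments inD : clear implicits.
Definition is_L (k l m n v : nat) : Prop :=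
  (exists A : 'M[nat]_(n * k, n * l), inD k l m n A /\ tdet _ _ A = v) /\
  (forall A : 'M[nat]_(n * k, n * l), inD k l m n A -> v <= tdet _ _ A).

(* Main.v *)
Require Import Defs.
From mathcomp Require Import all_boot all_order all_algebra.
From mathcomp Require Import zify.
Set Implicit Arguments. Unset Strict Implicit. Unset Printing Implicit Defensive.

Definition nu s t (A : 'M[nat]_(s, t)) : nat :=
  \max_(f : {ffun 'I_s -> 'I_t} | injectiveb f) \sum_(i < s) A i (f i).

Lemma nu_ge s t (A : 'M[nat]_(s, t)) (f : {ffun 'I_s -> 'I_t}) :
  injective f -> \sum_(i < s) A i (f i) <= nu A.
Proof. by move=> injf; apply: (leq_bigmax_cond f); apply/injectiveP. Qed.

Lemma nu_attained s t (A : 'M[nat]_(s, t)) : s <= t ->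
  exists2 f : {ffun 'I_s -> 'I_t}, injective f & nu A = \sum_(i < s) A i (f i).
Proof.
move=> Hst.
pose f0 : {ffun 'I_s -> 'I_t} := [ffun i => widen_ord Hst i].
have if0 : injectiveb f0.
  by apply/injectiveP => x y; rewrite !ffunE => /(congr1 val) /= /val_inj.
rewrite /nu (bigmax_eq_arg f0) //.
case: arg_maxnP => // f /injectiveP injf _; by exists f.
Qed.

Lemma ext_le s t (A : 'M[nat]_(s, t)) : s <= t -> forall n0 (S : {set 'I_s})
  (h : 'I_s -> 'I_t), #|~: S| = n0 -> {in S &, injective h} ->
  \sum_(r in S) A r (h r) <= nu A.
Proof.
move=> Hst; elim=> [|n0 IH] S h hc hinj.
  move/eqP: hc; rewrite cards_eq0 => /eqP hc.
  have ST : S = setT by rewrite -[S]setCK hc setC0.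
  subst S.
  pose f : {ffun 'I_s -> 'I_t} := [ffun r => h r].
  have finj : injective f.
    by move=> x y; rewrite !ffunE; apply: hinj; rewrite in_setT.
  apply: leq_trans (nu_ge A finj).
  rewrite (eq_bigl xpredT); last by move=> r; rewrite in_setT.
  apply: leq_sum => r _; by rewrite ffunE.
have [i0 i0S] : exists i0, i0 \in ~: S.
  by apply/set0Pn; rewrite -cards_eq0 hc.
have i0nS : i0 \notin S by rewrite -in_setC.
have [c cnot] : exists c, c \notin h @: S.
  case: (pickP [pred c | c \notin h @: S]) => [c cP|none]; first by exists c.
  exfalso.
  have h1 : #|'I_t| <= #|h @: S|.
    apply: subset_leq_card; apply/subsetP => x _.
    by move: (none x) => /= /negbFE.
  have h2 := leq_imset_card h S.
  have h3 := cardsC S.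
  rewrite !card_ord hc in h1 h3.
  have h4 := leq_trans h1 h2.
  move: h3 h4 Hst; move: #|S| => b; lia.
have := IH (i0 |: S) (fun r => if r == i0 then c else h r).
rewrite big_setU1 //= eqxx.
rewrite (eq_bigr (fun r => A r (h r))); last first.
  move=> r rS; case: eqP => // rE; by rewrite rE (negbTE i0nS) in rS.
move=> H; apply: leq_trans (H _ _); first by rewrite leq_addl.
  have -> : ~: (i0 |: S) = ~: S :\ i0.
    by apply/setP=> x; rewrite !inE; case: (x == i0).
  have := cardsD1 i0 (~: S); rewrite i0S hc add1n => -[] ->; done.
move=> x y; rewrite !inE => /orP[/eqP->|xS] /orP[/eqP->|yS]; rewrite ?eqxx //.
- have yn : (y == i0) = false by apply/negbTE; apply: contraNneq i0nS => <-.
  rewrite yn => E; exfalso; move/negP: cnot; apply; rewrite E; exact: imset_f.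
- have xn : (x == i0) = false by apply/negbTE; apply: contraNneq i0nS => <-.
  rewrite xn => E; exfalso; move/negP: cnot; apply; rewrite -E; exact: imset_f.
- have yn : (y == i0) = false by apply/negbTE; apply: contraNneq i0nS => <-.
  have xn : (x == i0) = false by apply/negbTE; apply: contraNneq i0nS => <-.
  rewrite xn yn; exact: hinj.
Qed.

Lemma ext_pos s t (A : 'M[nat]_(s, t)) (h : 'I_s -> 'I_t) : s <= t ->
  {in [pred r | 0 < A r (h r)] &, injective h} -> \sum_r A r (h r) <= nu A.
Proof.
move=> Hst hinj.
rewrite (bigID (fun r => 0 < A r (h r))) /=.
rewrite [X in _ + X]big1; last by move=> r; rewrite lt0n negbK => /eqP.
rewrite addn0.
have H := @ext_le s t A Hst _ [set r | 0 < A r (h r)] h erefl.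
rewrite (eq_bigl (fun r => r \in [set r | 0 < A r (h r)])); last by move=> r; rewrite inE.
apply: H => x y; rewrite !inE; exact: hinj.
Qed.

Lemma sum_pick1 n (F : 'I_n -> nat) i : (forall r, r != i -> F r = 0) ->
  \sum_r F r = F i.
Proof. by move=> H; rewrite (bigD1 i) //= big1 ?addn0. Qed.

Lemma exchange s t (A : 'M[nat]_(s, t)) (f g : 'I_s -> 'I_t) i j :
  s <= t -> injective f -> injective g -> A i (f i) = 0 ->
  (forall r, g r = j -> A r j = 0) -> 0 < A i j ->
  nu A <= \sum_r A r (f r) -> nu A <= \sum_r A r (g r) -> False.
Proof.
move=> Hst finj ginj Afi Agj Aij Hf Hg.
pose e : rel 'I_s := fun r r' => (0 < A r (g r)) && (f r' == g r).
pose P := [set r | connect e i r].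
have Pi : i \in P by rewrite inE connect0.
have Pcl : forall r r', r \in P -> e r r' -> r' \in P.
  move=> r r'; rewrite !inE => Hr Hrr'; apply: connect_trans Hr (connect1 Hrr').
have Ppred : forall r, r \in P -> r != i -> exists2 r'', r'' \in P & e r'' r.
  move=> r; rewrite inE => /connectP [p pth ->]; move: pth.
  elim/last_ind: p => [|p x _] /=; first by rewrite eqxx.
  rewrite rcons_path last_rcons => /andP[pp ex] _.
  exists (last i p) => //; rewrite inE; apply/connectP; by exists p.
pose h1 r := if r \in P then g r else f r.
pose h2 r := if r == i then j else if r \in P then f r else g r.
have H1 : \sum_r A r (h1 r) <= nu A.
  apply: ext_pos => // x y; rewrite !inE /h1 => px py.
  case: ifP px => xP px; case: ifP py => yP py.
  - by apply: ginj.
  - move=> E; have : y \in P.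
      by apply: (Pcl x) => //; apply/andP; split => //; rewrite E.
    by rewrite yP.
  - move=> E; have : x \in P.
      by apply: (Pcl y) => //; apply/andP; split => //; rewrite E.
    by rewrite xP.
  - by apply: finj.
have H2 : \sum_r A r (h2 r) <= nu A.
  apply: ext_pos => // x y; rewrite !inE /h2 => px py.
  have caseA : forall z, z != i -> z \in P -> f z = j -> False.
    move=> z zi zP fz; have [r'' r''P /andP[pos /eqP E]] := Ppred z zP zi.
    by move: pos; rewrite -E fz Agj ?ltnn // -E.
  have caseB : forall z, z \notin P -> 0 < A z (g z) -> g z = j -> False.
    by move=> z zP pos gz; move: pos; rewrite gz Agj.
  have caseC : forall z w, z != i -> z \in P -> w \notin P -> f z = g w -> False.
    move=> z w zi zP wP E; have [r'' r''P /andP[pos /eqP E2]] := Ppred z zP zi.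
    have ww : w = r'' by apply: ginj; rewrite -E E2.
    by move: wP; rewrite ww r''P.
  case: (eqVneq x i) px => [->|xi] px; case: (eqVneq y i) py => [->|yi] py //.
  - case: ifP py => yP py E.
      by exfalso; apply: (caseA y yi yP); rewrite -E.
    by exfalso; apply: (caseB y (negbT yP) py); rewrite -E.
  - case: ifP px => xP px E.
      by exfalso; apply: (caseA x xi xP); rewrite E.
    by exfalso; apply: (caseB x (negbT xP) px); rewrite E.
  - case: ifP px => xP px; case: ifP py => yP py E.
    + exact: finj.
    + by exfalso; apply: (caseC x y xi xP (negbT yP)).
    + by exfalso; apply: (caseC y x yi yP (negbT xP)).
    + exact: ginj.
have pw : forall r, A r (h1 r) + A r (h2 r) =
    A r (f r) + A r (g r) + (if r == i then A i j else 0).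
  move=> r; rewrite /h1 /h2; case: (eqVneq r i) => [->|ri].
    by rewrite Pi Afi /=; lia.
  by case: ifP => _; lia.
have Hsum : \sum_r A r (h1 r) + \sum_r A r (h2 r) =
    \sum_r A r (f r) + \sum_r A r (g r) + A i j.
  rewrite -big_split /= (eq_bigr _ (fun r _ => pw r)) !big_split /=.
  rewrite (@sum_pick1 s (fun r => if r == i then A i j else 0) i) ?eqxx //.
  by move=> r /negbTE ->.
lia.
Qed.

Lemma sum_lt n (F G : 'I_n -> nat) x0 :
  (forall x, F x <= G x) -> F x0 < G x0 -> \sum_x F x < \sum_x G x.
Proof.
move=> le lt; rewrite (bigD1 x0) //= [X in _ < X](bigD1 x0) //=.
by rewrite -addSn leq_add // leq_sum.
Qed.

Definition Rdec s t (i : 'I_s) (A : 'M[nat]_(s, t)) : 'M[nat]_(s, t) :=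
  \matrix_(r, c) (if r == i then (A r c).-1 else A r c).
Definition Cdec s t (j : 'I_t) (A : 'M[nat]_(s, t)) : 'M[nat]_(s, t) :=
  \matrix_(r, c) (if c == j then (A r c).-1 else A r c).

Lemma egervary s t (A : 'M[nat]_(s, t)) : s <= t ->
  exists (u : 'I_s -> nat) (v : 'I_t -> nat),
    (forall i j, A i j <= u i + v j) /\ \sum_i u i + \sum_j v j <= nu A.
Proof.
move=> Hst.
have [N] := ubnP (\sum_i \sum_j A i j); elim: N A => // N IH A /ltnSE HN.
case: (boolP [exists i, nu (Rdec i A) < nu A]) => [/existsP [i Hi]|noR].
  have [c Hc] : exists c, 0 < A i c.
    case: (boolP [exists c, 0 < A i c]) => [/existsP [c Hc]|/existsPn nc].
      by exists c.
    have E : Rdec i A = A.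
      apply/matrixP => r c; rewrite mxE; case: eqP => // ->.
      by move: (nc c); rewrite lt0n negbK => /eqP ->.
    by move: Hi; rewrite E ltnn.
  have lt : \sum_r \sum_c Rdec i A r c < \sum_r \sum_c A r c.
    apply: (sum_lt (x0 := i)) => [r|].
      by apply: leq_sum => c0 _; rewrite mxE; case: eqP => _ //; apply: leq_pred.
    apply: (sum_lt (x0 := c)) => [c'|]; rewrite mxE eqxx //.
    exact: leq_pred.
    by rewrite prednK.
  have [u [v [Hc1 Hs1]]] := IH (Rdec i A) (leq_trans lt HN).
  exists (fun r => u r + (r == i)), v; split.
    move=> r c'; have := Hc1 r c'; rewrite mxE; case: eqP => [->|_] /=; lia.
  rewrite big_split /= (@sum_pick1 s (fun r => nat_of_bool (r == i)) i) ?eqxx /=.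
    by rewrite -addnA [1 + _]addnC addnA addn1; exact: leq_ltn_trans Hs1 Hi.
  by move=> r /negbTE ->.
case: (boolP [exists j, nu (Cdec j A) < nu A]) => [/existsP [j Hj]|noC].
  have [c Hc] : exists c, 0 < A c j.
    case: (boolP [exists c, 0 < A c j]) => [/existsP [c Hc]|/existsPn nc].
      by exists c.
    have E : Cdec j A = A.
      apply/matrixP => r c; rewrite mxE; case: eqP => // ->.
      by move: (nc r); rewrite lt0n negbK => /eqP ->.
    by move: Hj; rewrite E ltnn.
  have lt : \sum_r \sum_c Cdec j A r c < \sum_r \sum_c A r c.
    apply: (sum_lt (x0 := c)) => [r|].
      by apply: leq_sum => c' _; rewrite mxE; case: eqP => _ //; apply: leq_pred.
    apply: (sum_lt (x0 := j)) => [c'|]; rewrite mxE ?eqxx //.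
    by case: eqP => _ //; apply: leq_pred.
    by rewrite prednK.
  have [u [v [Hc1 Hs1]]] := IH (Cdec j A) (leq_trans lt HN).
  exists u, (fun c => v c + (c == j)); split.
    move=> r c'; have := Hc1 r c'; rewrite mxE; case: eqP => [->|_] /=; lia.
  rewrite big_split /= (@sum_pick1 t (fun c => nat_of_bool (c == j)) j) ?eqxx /=.
    by rewrite addnA addn1; exact: leq_ltn_trans Hs1 Hj.
  by move=> r /negbTE ->.
case: (boolP [exists i, exists j, 0 < A i j]) => [/existsP [i /existsP [j Aij]]|zero].
  exfalso.
  have [f finj Ef] := nu_attained (Rdec i A) Hst.
  have [g ginj Eg] := nu_attained (Cdec j A) Hst.
  have nR : nu A <= nu (Rdec i A).
    by move/existsPn: noR => /(_ i); rewrite -leqNgt.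
  have nC : nu A <= nu (Cdec j A).
    by move/existsPn: noC => /(_ j); rewrite -leqNgt.
  have sf : \sum_r A r (f r) = \sum_r Rdec i A r (f r) + (0 < A i (f i)).
    have pick := @sum_pick1 s (fun r => nat_of_bool ((r == i) && (0 < A r (f r)))) i.
    rewrite /= eqxx /= in pick; rewrite -pick; last by move=> r /negbTE ->.
    rewrite -big_split /=; apply: eq_bigr => r _; rewrite mxE.
    by case: (r == i) => /=; [case: (A r (f r)) => [|a] //=; rewrite addn1 | rewrite addn0].
  have sg : \sum_r A r (g r) = \sum_r Cdec j A r (g r) +
             \sum_r ((g r == j) && (0 < A r (g r))).
    rewrite -big_split /=; apply: eq_bigr => r _; rewrite mxE.
    by case: (g r == j) => /=; [case: (A r (g r)) => [|a] //=; rewrite addn1 | rewrite addn0].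
  have nf := nu_ge A finj.
  have ng := nu_ge A ginj.
  have Afi : A i (f i) = 0.
    move: sf; case: (posnP (A i (f i))) => // pos E; have := leq_trans nf nR; by rewrite Ef E addn1 ltnn.
  have Agj : forall r, g r = j -> A r j = 0.
    move=> r grj; case: (posnP (A r j)) => // pos2; exfalso.
    have X1 : 1 <= \sum_r ((g r == j) && (0 < A r (g r))).
      by rewrite (bigD1 r) //= grj eqxx pos2.
    have H := leq_trans ng nC; rewrite Eg sg in H.
    move: H; rewrite -[X in _ <= X]addn0 leq_add2l leqn0 => /eqP H.
    by rewrite H in X1.
  apply: (@exchange s t A (fun r => f r) (fun r => g r) i j Hst finj ginj Afi Agj Aij).
    by rewrite sf -Ef; apply: leq_trans nR (leq_addr _ _).
  by rewrite sg -Eg; apply: leq_trans nC (leq_addr _ _).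
exists (fun _ => 0), (fun _ => 0); split.
  move=> i j; move/existsPn: zero => /(_ i) /existsPn /(_ j).
  by rewrite lt0n negbK => /eqP ->.
by rewrite !big1.
Qed.

Lemma sum_lt_e p e : e <= p -> \sum_(0 <= j < p) (j < e) = e.
Proof.
move=> hep; rewrite (@big_cat_nat _ _ _ e) //=.
rewrite (eq_big_nat _ _ (F2 := fun _ => 1)); last by move=> j /andP[_ ->].
rewrite (eq_big_nat _ _ (F1 := fun j => nat_of_bool (j < e)) (F2 := fun _ => 0)); last first.
  by move=> j /andP[H _]; rewrite ltnNge H.
by rewrite !sum_nat_const_nat muln0 addn0 muln1 subn0.
Qed.

Lemma sum_mod_period p e c : 0 < p -> e <= p ->
  \sum_(0 <= j < p) ((c + j) %% p < e) = e.
Proof.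
move=> p0 hep; elim: c => [|c IH].
  rewrite -{2}(sum_lt_e hep); apply: eq_big_nat => j /andP[_ jp].
  by rewrite add0n modn_small.
have E1 := @big_nat_recl nat 0 addn p 0 (fun j => nat_of_bool ((c + j) %% p < e)) (leq0n p).
have E2 := @big_nat_recr nat 0 addn p 0 (fun j => nat_of_bool ((c + j) %% p < e)) (leq0n p).
have E3 : (c + p) %% p = (c + 0) %% p by rewrite addn0 modnDr.
rewrite /= E3 in E2.
have E4 : \sum_(0 <= j < p) ((c.+1 + j) %% p < e) =
          \sum_(0 <= i < p) ((c + i.+1) %% p < e).
  by apply: eq_big_nat => j _; rewrite addSnnS.
rewrite E4; move: E1 E2; rewrite IH; lia.
Qed.

Lemma sum_mod p N e c : 0 < p -> e <= p ->
  \sum_(0 <= j < p * N) ((c + j) %% p < e) = N * e.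
Proof.
move=> p0 hep; elim: N => [|N IH]; first by rewrite muln0 big_geq.
rewrite mulnS addnC (@big_cat_nat _ _ _ (p * N)) /= ?leq_addr // IH.
rewrite -{1}[p * N]add0n big_addn addKn.
rewrite (eq_big_nat _ _ (F2 := fun j => nat_of_bool ((c + j) %% p < e))).
  by rewrite sum_mod_period // mulSn addnC.
move=> j _; by rewrite addnA -modnDmr modnMr addn0.
Qed.

Lemma sum_mod_ord p N e c : 0 < p -> e <= p ->
  \sum_(j < p * N) ((c + j) %% p < e) = N * e.
Proof. move=> p0 hep; rewrite -(sum_mod N c p0 hep) big_mkord //. Qed.

Lemma sum_split N a (F G : nat -> nat) : a <= N ->
  \sum_(j < N) (if j < a then F j else G j) =
  \sum_(0 <= j < a) F j + \sum_(a <= j < N) G j.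
Proof.
move=> aN.
rewrite -(big_mkord xpredT (fun j => if j < a then F j else G j)).
rewrite (@big_cat_nat _ _ _ a) //=; congr (_ + _); apply: eq_big_nat.
  by move=> j /andP[_ ->].
by move=> j /andP[H _]; rewrite ltnNge H.
Qed.

Lemma cover_ge s t (A : 'M[nat]_(s, t)) (u : 'I_s -> nat) (v : 'I_t -> nat) :
  (forall i j, A i j <= u i + v j) -> nu A <= \sum_i u i + \sum_j v j.
Proof.
move=> H; apply/bigmax_leqP => f /injectiveP finj.
apply: leq_trans (_ : \sum_i (u i + v (f i)) <= _).
  by apply: leq_sum => i _; apply: H.
rewrite big_split /= leq_add2l.
have E : \sum_(j in f @: [set: 'I_s]) v j = \sum_(i in [set: 'I_s]) v (f i).
  by apply: big_imset => x y _ _; apply: finj.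
have E2 : \sum_(i in [set: 'I_s]) v (f i) = \sum_i v (f i).
  by apply: eq_bigl => i; rewrite in_setT.
rewrite -E2 -E [X in _ <= X](bigID (fun j => j \in f @: [set: 'I_s])) /=.
exact: leq_addr.
Qed.

Lemma sum_const_ord N c : \sum_(i < N) c = N * c.
Proof. by rewrite big_const_ord iter_addn_0 mulnC. Qed.

Lemma arith (k l n m q r a b U W : nat) :
  0 < k -> k <= l -> 1 <= n -> m = q * n + r -> r < n ->
  m * l <= n * l * a + W -> m * k <= n * k * b + U ->
  n * k * a <= U -> n * l * b <= W ->
  minn (n * k * (q + 1)) (m * k + r * l) <= U + W.
Proof.
move=> k0 kl n1 hm rn H1 H2 H3 H4; rewrite geq_min.
case: (leqP (q + 1) a) => qa.
  have : n * k * (q + 1) <= n * k * a by rewrite leq_mul2l qa orbT.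
  lia.
case: (leqP (q + 1) b) => qb.
  have : n * k * (q + 1) <= n * l * b.
    by apply: leq_mul => //; rewrite leq_mul2l kl orbT.
  lia.
case: (leqP (a + b) q) => qab.
  have P1 : n * k * b <= n * l * b by rewrite leq_mul2r leq_mul2l kl !orbT.
  have P2 : n * l * a + n * l * b <= n * l * q by rewrite -mulnDr leq_mul2l qab orbT.
  have P3 : m * l = n * l * q + r * l by rewrite hm; lia.
  have P4 : m * k = n * k * q + r * k by rewrite hm; lia.
  lia.
have : n * k * (q + 1) <= n * k * a + n * k * b by rewrite -mulnDr leq_mul2l addn1 qab orbT.
have : n * k * b <= n * l * b by rewrite leq_mul2r leq_mul2l kl !orbT.
lia.
Qed.

Lemma lower (k l n m q r : nat) (A : 'M[nat]_(n * k, n * l)) :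
  0 < k -> k <= l -> 1 <= n -> m = q * n + r -> r < n -> inD k l m n A ->
  minn (n * k * (q + 1)) (m * k + r * l) <= nu A.
Proof.
move=> k0 kl n1 hm rn [Hrow Hcol].
have Hst : n * k <= n * l by rewrite leq_mul2l kl orbT.
have [u [v [Hc Hs]]] := egervary A Hst.
apply: leq_trans Hs.
have nk0 : 0 < n * k by rewrite muln_gt0 n1.
have nl0 : 0 < n * l by apply: leq_trans Hst.
pose i0 : 'I_(n * k) := Ordinal nk0.
pose j0 : 'I_(n * l) := Ordinal nl0.
case: (@arg_minnP _ i0 xpredT u erefl) => ia _ Hia.
case: (@arg_minnP _ j0 xpredT v erefl) => jb _ Hjb.
apply: (@arith k l n m q r (u ia) (v jb)) => //.
- rewrite -(Hrow ia); apply: leq_trans (_ : \sum_j (u ia + v j) <= _).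
    by apply: leq_sum => j _; apply: Hc.
  by rewrite big_split /= sum_const_ord mulnC.
- rewrite -(Hcol jb); apply: leq_trans (_ : \sum_i (u i + v jb) <= _).
    by apply: leq_sum => i _; apply: Hc.
  by rewrite big_split /= [X in _ + X]sum_const_ord addnC.
- rewrite -sum_const_ord; apply: leq_sum => i _; exact: Hia.
- rewrite -sum_const_ord; apply: leq_sum => j _; exact: Hjb.
Qed.

Lemma constr2 (k l n m q r : nat) : 1 <= n -> r < n -> m = q * n + r ->
  exists A : 'M[nat]_(n * k, n * l), inD k l m n A /\ nu A <= n * k * (q + 1).
Proof.
move=> n1 rn hm.
exists (\matrix_(i, j) (q + ((i + j) %% n < r))%N)%R; split; first split.
- move=> i; under eq_bigr => j _ do rewrite mxE.
  rewrite big_split /= sum_const_ord sum_mod_ord ?(ltnW rn) //; lia.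
- move=> j; under eq_bigr => i _ do rewrite mxE [i + j]addnC.
  rewrite big_split /= sum_const_ord sum_mod_ord ?(ltnW rn) //; lia.
- apply: leq_trans (cover_ge (u := fun _ => q + 1) (v := fun _ => 0) _) _.
    by move=> i j; rewrite mxE addn0 leq_add2l; case: (_ < r).
  by rewrite !sum_const_ord muln0 addn0 mulnC.
Qed.

Lemma constr1 (k l n m q r : nat) : 1 <= n -> r < n -> m = q * n + r ->
  n <= r * (q + 2) ->
  exists A : 'M[nat]_(n * k, n * l), inD k l m n A /\
     nu A <= n * k * q + r * (k + l).
Proof.
move=> n1 rn hm hd.
have r0 : 0 < r by case: r hd rn {hm} => //; rewrite mul0n; case: n n1.
set d := r * (q + 2) - n.
set q' := d %/ r.
set e := d %% r.
have hde : d = q' * r + e by rewrite /q' /e -divn_eq.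
have hd2 : d + n = r * (q + 2) by rewrite /d subnK.
have er : e <= r by rewrite ltnW // ltn_mod.
have q'q : q' <= q.+1.
  have : q' * r < (q + 2) * r.
    apply: leq_ltn_trans (leq_trunc_div d r) _.
    rewrite /d mulnC; lia.
  by rewrite ltn_mul2r r0 /= addn2 ltnS.
have rkn : r * k <= n * k by rewrite leq_mul2r (ltnW rn) orbT.
have rln : r * l <= n * l by rewrite leq_mul2r (ltnW rn) orbT.
exists (\matrix_(i, j)
   (if i < r * k then (if j < r * l then q' + ((i + j) %% r < e) else q.+1)
    else (if j < r * l then q.+1 else q))%N)%R; split; first split.
- move=> i; under eq_bigr => j _ do rewrite mxE.
  case: (ltnP i (r * k)) => hi.
    rewrite (@sum_split _ (r * l) (fun j => q' + ((i + j) %% r < e)) (fun _ => q.+1)) //.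
    rewrite big_split /= sum_nat_const_nat sum_mod // sum_nat_const_nat.
    have E1 : l * d + l * n = l * r * (q + 2) by rewrite -mulnDr hd2 mulnA.
    have E2 : l * d = l * q' * r + l * e by rewrite hde; lia.
    nia.
  rewrite (@sum_split _ (r * l) (fun _ => q.+1) (fun _ => q)) //.
  rewrite !sum_nat_const_nat.
  nia.
- move=> j; under eq_bigr => i _ do rewrite mxE.
  case: (ltnP j (r * l)) => hj.
    under eq_bigr => i _ do rewrite [i + j]addnC.
    rewrite (@sum_split _ (r * k) (fun i => q' + ((j + i) %% r < e)) (fun _ => q.+1)) //.
    rewrite big_split /= sum_nat_const_nat sum_mod // sum_nat_const_nat.
    have E1 : k * d + k * n = k * r * (q + 2) by rewrite -mulnDr hd2 mulnA.
    have E2 : k * d = k * q' * r + k * e by rewrite hde; lia.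
    nia.

  rewrite (@sum_split _ (r * k) (fun _ => q.+1) (fun _ => q)) //.
  rewrite !sum_nat_const_nat.
  nia.
- apply: leq_trans (cover_ge (u := fun i : 'I_(n * k) => if i < r * k then q.+1 else q)
                             (v := fun j : 'I_(n * l) => if j < r * l then 1 else 0) _) _.
    move=> i j; rewrite mxE.
    case: (i < r * k); case: (j < r * l) => //=; try lia.
  rewrite (@sum_split _ (r * k) (fun _ => q.+1) (fun _ => q)) //.
  rewrite (@sum_split _ (r * l) (fun _ => 1) (fun _ => 0)) //.
  rewrite !sum_nat_const_nat.
  nia.
Qed.

Lemma tdet_nu k l n (A : 'M[nat]_(n * k, n * l)) : k <= l ->
  tdet (n * k) (n * l) A = nu A.
Proof. by move=> kl; rewrite /tdet leq_mul2l kl orbT. Qed.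

Theorem corollary4p3 (k l n m q r : nat) :
  0 < k -> k <= l -> coprime k l -> 1 <= n ->
  m = q * n + r -> r < n ->
  ((n <= r * (q + 2) /\ r * (k + l) <= n * k) ->
     is_L k l m n (n * k * q + r * (k + l))) /\
  (n * k <= r * (k + l) ->
     is_L k l m n (n * k * (q + 1))).
Proof.
move=> k0 kl _ n1 hm rn; split.
  move=> [hd hr].
  have lowV : forall A : 'M[nat]_(n * k, n * l), inD k l m n A ->
      n * k * q + r * (k + l) <= nu A.
    move=> A HA; apply: leq_trans (lower k0 kl n1 hm rn HA).
    rewrite leq_min; apply/andP; split; nia.
  split.
    have [A [HA HnA]] := constr1 k l n1 rn hm hd.
    exists A; split => //; rewrite tdet_nu //.
    by apply/eqP; rewrite eqn_leq HnA lowV.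
  by move=> A HA; rewrite tdet_nu // lowV.
move=> hr.
have lowV : forall A : 'M[nat]_(n * k, n * l), inD k l m n A ->
    n * k * (q + 1) <= nu A.
  move=> A HA; apply: leq_trans (lower k0 kl n1 hm rn HA).
  rewrite leq_min; apply/andP; split; nia.
split.
  have [A [HA HnA]] := constr2 k l n1 rn hm.
  exists A; split => //; rewrite tdet_nu //.
  by apply/eqP; rewrite eqn_leq HnA lowV.
by move=> A HA; rewrite tdet_nu // lowV.
Qed.
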